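(* Let $N\in\mathbb N$. For all nonzero $f,g\in R_J(N)$, $$\nu_J(fg)=\nu_J(f)+\nu_J(g),$$ where the right-hand side is the Minkowski sum of subsets of $\mathbb R^2$.
   Context: $R(N)=\mathbb C[\zeta^{1/N},\zeta^{-1/N}]((q^{1/N}))$ is the ring of formal series $f=\sum_{n,r\in\frac1N\mathbb Z}c(n,r)q^n\zeta^r$ such that for each $n$ only finitely many $r$ have $c(n,r)\ne0$ and $n$ is bounded below on the support $\operatorname{supp}(f)=\{(n,r): c(n,r)\neq0\}$. $R_J(N)$ is the set of $f\in R(N)$ for which there exist $a>0$ and $b,c\in\mathbb R$ with $\operatorname{supp}(f)\subseteq\{(n,r)\in\mathbb R^2: n\ge ar^2+br+c\}$ (it is a subring of $R(N)$). For $P\subseteq\mathbb R^2$, $\operatorname{conv}(P;\vec A)=\operatorname{conv}(P)+[0,\infty)\times\{0\}$. The Jacobi valuation is $\nu_J(f)=\operatorname{Closure}_{\mathbb R^2}(\operatorname{conv}(\operatorname{supp}(f);\vec A))$. *)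

(* Defs.v *)
From HB Require Import structures.
From mathcomp Require Import all_boot all_order all_algebra.
From mathcomp Require Import complex.
From mathcomp Require Import all_classical all_reals all_analysis.
From mathcomp Require Import Rstruct Rstruct_topology.
From Stdlib Require Import Rdefinitions.
Set Implicit Arguments. Unset Strict Implicit. Unset Printing Implicit Defensive.
Import Order.TTheory GRing.Theory Num.Theory.
Local Open Scope classical_set_scope.
Local Open Scope ring_scope.

Notation Rl := Rdefinitions.R.
Notation CC := (complex Rl).

(* A formal series f = sum c(n,r) q^n zeta^r with n, r in (1/N)Z is encoded by
   its coefficient function: coef f k l = c(k/N, l/N), for k l : int. *)
Definition jseries := int -> int -> CC.

Definition inRN (f : jseries) : Prop :=
  (forall k : int, finite_set [set l : int | f k l != 0]) /\
  (exists k0 : int, forall k l, f k l != 0 -> k0 <= k).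

Definition jsupp (N : nat) (f : jseries) : set (Rl * Rl) :=
  [set p | exists k l : int, f k l != 0 /\
     p = ((k%:~R / N%:R : Rl), (l%:~R / N%:R : Rl))].

Definition inRJ (N : nat) (f : jseries) : Prop :=
  inRN f /\
  exists a b c : Rl, 0 < a /\
    jsupp N f `<=` [set p | p.1 >= a * p.2 ^+ 2 + b * p.2 + c].

(* Product of series (Cauchy product), coefficientwise; the sum has finite
   support for f, g in R(N). *)
Definition jmul (f g : jseries) : jseries :=
  fun k l => \sum_(p \in [set: int * int]) f p.1 p.2 * g (k - p.1) (l - p.2).

Definition nonzero_series (f : jseries) : Prop := exists k l, f k l != 0.

Definition jconv (P : set (Rl * Rl)) : set (Rl * Rl) :=
  [set x | exists (n : nat) (pts : 'I_n -> Rl * Rl) (w : 'I_n -> Rl),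
     (forall i, P (pts i)) /\ (forall i, 0 <= w i) /\ \sum_(i < n) w i = 1 /\
     x = (\sum_(i < n) w i * (pts i).1, \sum_(i < n) w i * (pts i).2)].

Definition minksum (A B : set (Rl * Rl)) : set (Rl * Rl) :=
  [set x | exists a b, A a /\ B b /\ x = (a.1 + b.1, a.2 + b.2)].

Definition rayA : set (Rl * Rl) := [set p | 0 <= p.1 /\ p.2 = 0].

Definition convA (P : set (Rl * Rl)) : set (Rl * Rl) := minksum (jconv P) rayA.

Definition nuJ (N : nat) (f : jseries) : set (Rl * Rl) :=
  closure (convA (jsupp N f)).

(* Main.v *)
Require Import Defs.
From HB Require Import structures.
From mathcomp Require Import all_boot all_order all_algebra.
From mathcomp Require Import all_classical all_reals all_analysis.
From mathcomp Require Import Rstruct Rstruct_topology.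
From mathcomp Require Import complex.
From mathcomp Require Import ring lra zify.
Require Import Defs.
Import Order.TTheory GRing.Theory Num.Theory.
Local Open Scope classical_set_scope.
Local Open Scope ring_scope.
Set Implicit Arguments. Unset Strict Implicit. Unset Printing Implicit Defensive.

Lemma seq_min (T : eqType) (s : seq T) (P : T -> bool) (F : T -> Rl) :
  (exists x, x \in s /\ P x) ->
  exists x, [/\ x \in s, P x & forall y, y \in s -> P y -> F x <= F y].
Proof.
elim: s => [[x []]//|a s IH] Hex.
case: (pselect (exists x, x \in s /\ P x)) => [/IH [x [xs Px Hx]]|Hn].
  case Pa: (P a); last first.
    exists x; split => //; try by rewrite in_cons xs orbT.
    by move=> y; rewrite in_cons => /orP [/eqP ->|/Hx //]; rewrite Pa.
  case: (leP (F x) (F a)) => Hxa.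
    exists x; split => //; try by rewrite in_cons xs orbT.
    by move=> y; rewrite in_cons => /orP [/eqP ->|/Hx //].
  exists a; split => //; try by rewrite in_cons eqxx.
  move=> y; rewrite in_cons => /orP [/eqP ->//|ys Py].
  by apply: le_trans (Hx y ys Py); apply: ltW.
case: Hex => x [xin Px].
have xa : x = a.
  move: xin; rewrite in_cons => /orP [/eqP //|xs]; exfalso; apply: Hn; by exists x.
subst x; exists a; split => //; try by rewrite in_cons eqxx.
move=> y; rewrite in_cons => /orP [/eqP ->//|ys Py]; exfalso; apply: Hn; by exists y.
Qed.

Definition ints (n : nat) : seq int := [seq (i%:Z - n%:Z) | i <- iota 0 (2*n).+1].

Lemma mem_ints (n : nat) (k : int) : (absz k <= n)%N -> k \in ints n.
Proof.
move=> H; apply/mapP; exists (absz (k + n%:Z)).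
  rewrite mem_iota /=; lia.
lia.
Qed.

Definition box (n : nat) : seq (int * int) := [seq (x, y) | x <- ints n, y <- ints n].

Lemma box_min (P : int -> int -> bool) (F : int -> int -> Rl) (B : nat) :
  (exists k l, [/\ P k l, (absz k <= B)%N & (absz l <= B)%N]) ->
  exists k l, [/\ P k l, (absz k <= B)%N, (absz l <= B)%N &
    forall k' l', P k' l' -> (absz k' <= B)%N -> (absz l' <= B)%N -> F k l <= F k' l'].
Proof.
move=> [k [l [Pkl Hk Hl]]].
have := @seq_min _ (box B) (fun x => [&& P x.1 x.2, (absz x.1 <= B)%N & (absz x.2 <= B)%N])
  (fun x => F x.1 x.2).
case.
  exists (k, l); split; last by rewrite /= Pkl Hk Hl.
  by apply: allpairs_f; apply: mem_ints.
move=> [k1 l1] [_ /and3P [P1 H1 H2] Hm]; exists k1, l1; split => // k' l' P' H1' H2'.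
apply: (Hm (k', l')) => /=; last by rewrite P' H1' H2'.
by apply: allpairs_f; apply: mem_ints.
Qed.

Section Main.
Variable N : nat.
Hypothesis hN : (0 < N)%N.

Definition pt (k l : int) : Rl * Rl := ((k%:~R / N%:R : Rl), (l%:~R / N%:R : Rl)).
Definition vl (b : Rl) (q : Rl * Rl) : Rl := q.1 + b * q.2.
Definition vi (b : Rl) (k l : int) : Rl := k%:~R + b * l%:~R.

Lemma N_gt0 : (0 : Rl) < N%:R.
Proof. by rewrite ltr0n. Qed.

Lemma N_neq0 : (N%:R : Rl) != 0.
Proof. by rewrite gt_eqF // N_gt0. Qed.

Lemma vl_pt b k l : vl b (pt k l) = vi b k l / N%:R.
Proof. rewrite /vl /pt /vi /=; have := N_neq0; move=> h; by field. Qed.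

Lemma vl_pt_le b k l k' l' : (vl b (pt k l) <= vl b (pt k' l')) = (vi b k l <= vi b k' l').
Proof. by rewrite !vl_pt ler_pM2r // invr_gt0 N_gt0. Qed.

Lemma viD b k l k' l' : vi b (k + k') (l + l') = vi b k l + vi b k' l'.
Proof. rewrite /vi !intrD; ring. Qed.

Definition good (S : int -> int -> bool) :=
  (exists k0 : int, forall k l, S k l -> k0 <= k) /\
  (forall b C : Rl, exists B : nat, forall k l, S k l -> vi b k l <= C ->
     (absz k <= B)%N /\ (absz l <= B)%N).

Lemma lexmin S b : good S -> (exists k l, S k l) ->
  exists k l, [/\ S k l, forall k' l', S k' l' -> vi b k l <= vi b k' l'
     & forall k' l', S k' l' -> vi b k' l' = vi b k l -> l <= l'].
Proof.
move=> [_ gS] [k0 [l0 S0]].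
have [B HB] := gS b (vi b k0 l0).
have [k1 [l1 [S1 _ _ H1]]] := @box_min S (vi b) B (ex_intro _ k0 (ex_intro _ l0
   (let: conj a c := HB k0 l0 S0 (lexx _) in And3 S0 a c))).
have Hm : forall k' l', S k' l' -> vi b k1 l1 <= vi b k' l'.
  move=> k' l' S'; case: (leP (vi b k' l') (vi b k0 l0)) => h.
    by have [h1 h2] := HB _ _ S' h; apply: H1.
  have [h1 h2] := HB _ _ S0 (lexx _).
  by apply: le_trans (H1 _ _ S0 h1 h2) (ltW h).
have Hb1 : vi b k1 l1 <= vi b k0 l0 by apply: Hm.
have [k [l [/andP [S2 /eqP E2] _ _ H2]]] :=
  @box_min (fun k l => S k l && (vi b k l == vi b k1 l1)) (fun k l => l%:~R) B
   (ex_intro _ k1 (ex_intro _ l1 (let: conj a c := HB k1 l1 S1 Hb1 in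
     And3 (introT andP (conj S1 (eqxx _))) a c))).
exists k, l; split => //; first by rewrite E2.
move=> k' l' S' E'.
have : vi b k' l' <= vi b k0 l0 by rewrite E' E2.
move/(HB k' l' S') => [h1 h2].
rewrite -(ler_int Rl); apply: (H2 k') => //.
by rewrite S' E' E2 eqxx.
Qed.


Lemma jmul_supp (f g : jseries) k l : jmul f g k l != 0 ->
  exists k1 l1, f k1 l1 != 0 /\ g (k - k1) (l - l1) != 0.
Proof.
move=> H; apply: contrapT => Hn; move/eqP: H; apply.
rewrite /jmul; apply: fsbig1 => [[k1 l1]] _ /=.
case: (eqVneq (f k1 l1) 0) => [->|h1]; first by rewrite mul0r.
case: (eqVneq (g (k - k1) (l - l1)) 0) => [->|h2]; first by rewrite mulr0.
by exfalso; apply: Hn; exists k1, l1.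
Qed.

Lemma jmul_vertex (f g : jseries) b k1 l1 k2 l2 :
  f k1 l1 != 0 -> g k2 l2 != 0 ->
  (forall k' l', f k' l' != 0 -> vi b k1 l1 <= vi b k' l') ->
  (forall k' l', f k' l' != 0 -> vi b k' l' = vi b k1 l1 -> l1 <= l') ->
  (forall k' l', g k' l' != 0 -> vi b k2 l2 <= vi b k' l') ->
  (forall k' l', g k' l' != 0 -> vi b k' l' = vi b k2 l2 -> l2 <= l') ->
  jmul f g (k1 + k2) (l1 + l2) = f k1 l1 * g k2 l2.
Proof.
move=> f1 g2 Hf1 Hf2 Hg1 Hg2.
rewrite /jmul -(@fsbig_widen _ _ _ _ [set (k1, l1)] setT); last 2 first.
- by [].
- move=> [k l] [_ /= Hne] /=; apply/eqP.
  case: (eqVneq (f k l) 0) => [->|h1]; first by rewrite mul0r.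
  case: (eqVneq (g (k1 + k2 - k) (l1 + l2 - l)) 0) => [->|h2]; first by rewrite mulr0.
  exfalso; apply: Hne.
  have A1 := Hf1 _ _ h1.
  have A2 := Hg1 _ _ h2.
  have E : vi b k l + vi b (k1 + k2 - k) (l1 + l2 - l) = vi b k1 l1 + vi b k2 l2.
    by rewrite -!viD; congr vi; ring.
  have E1 : vi b k l = vi b k1 l1 by lra.
  have E2 : vi b (k1 + k2 - k) (l1 + l2 - l) = vi b k2 l2 by lra.
  have L1 := Hf2 _ _ h1 E1.
  have L2 := Hg2 _ _ h2 E2.
  have El : l = l1 by lia.
  subst l.
  move: E1; rewrite /vi => E1.
  have : (k%:~R : Rl) = k1%:~R by lra.
  by move/eqP; rewrite eqr_int => /eqP ->.
by rewrite fsbig_set1 /= addrC addKr addrC addKr.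
Qed.

Lemma abs_bound (k : int) (X : Rl) : `|(k%:~R : Rl)| <= X ->
  (absz k <= absz (Num.ceil X))%N.
Proof.
move=> h; have h1 := ceil_ge X.
have : `|k| <= Num.ceil X by rewrite -(ler_int Rl) intr_norm; exact: le_trans h h1.
lia.
Qed.

Lemma good_RJ f : inRJ N f -> good (fun k l => f k l != 0).
Proof.
move=> [[_ [k0 Hk0]] [a [b [c [a0 Hp]]]]].
split; first by exists k0.
move=> be C.
set C' := C / N%:R.
set D := `|C' - c| + `|b + be|.
set R0 := 1 + D / a.
set R1 := `|k0%:~R / N%:R| + `|C'| + `|be| * R0.
exists (absz (Num.ceil (N%:R * (R0 + R1)))).
move=> k l Hkl Hv.
set n := (k%:~R / N%:R : Rl); set r := (l%:~R / N%:R : Rl).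
have Hpar : a * r ^+ 2 + b * r + c <= n.
  by apply: (Hp (n, r)); exists k, l.
have Hv' : n + be * r <= C'.
  have Ninv : 0 < (N%:R : Rl)^-1 by rewrite invr_gt0 N_gt0.
  have := Hv; rewrite -(ler_pM2r Ninv) -/C'.
  by rewrite /vi mulrDl -mulrA -/n -/r.
have D0 : 0 <= D by rewrite addr_ge0.
have aR0 : a * R0 = a + D by rewrite /R0; field; rewrite gt_eqF.
have R0ge1 : 1 <= R0 by rewrite /R0 lerDl divr_ge0 // ltW.
have Hr : `|r| <= R0.
  rewrite -(ler_pM2l a0) aR0.
  case: (leP `|r| 1) => ht.
    have : a * `|r| <= a * 1 by rewrite ler_pM2l.
    lra.
  have e1 : r ^+ 2 = `|r| * `|r| by rewrite -normrM -expr2 ger0_norm // sqr_ge0.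
  have e2 : - ((b + be) * r) <= `|b + be| * `|r|.
    by rewrite -normrM -normrN ler_norm.
  have e3 : C' - c <= `|C' - c| by apply: ler_norm.
  have e4 : `|C' - c| <= `|C' - c| * `|r|.
    by rewrite ler_peMr // ltW.
  have e5 : a * (`|r| * `|r|) <= D * `|r| by move: Hpar; rewrite e1 /D; nra.
  have rpos : 0 < `|r| by lra.
  have : a * `|r| <= D by move: e5; rewrite mulrA ler_pM2r.
  lra.
have Hn : `|n| <= R1.
  rewrite ler_norml; apply/andP; split.
    have : k0%:~R / N%:R <= n.
      by rewrite ler_pM2r ?invr_gt0 ?N_gt0 // ler_int; apply: (Hk0 _ l).
    have := ler_norm (- (k0%:~R / N%:R : Rl)); rewrite normrN.
    have : 0 <= `|C'| + `|be| * R0 by apply: addr_ge0 => //; apply: mulr_ge0 => //; lra.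
    rewrite /R1; lra.
  have e1 : - (be * r) <= `|be| * R0.
    have := ler_norm (- (be * r)); rewrite normrN normrM => h.
    have : `|be| * `|r| <= `|be| * R0 by apply: ler_wpM2l.
    lra.
  have := ler_norm C'.
  have := normr_ge0 (k0%:~R / N%:R : Rl).
  rewrite /R1; lra.
have R1ge0 : 0 <= R1 by apply: le_trans Hn.
have NR : N%:R * R0 <= N%:R * (R0 + R1) by rewrite ler_pM2l ?N_gt0 // lerDl.
have NR' : N%:R * R1 <= N%:R * (R0 + R1) by rewrite ler_pM2l ?N_gt0 // lerDr; lra.
split; apply: abs_bound.
  have -> : (k%:~R : Rl) = N%:R * n by rewrite /n; field; exact: N_neq0.
  rewrite normrM (ger0_norm (ltW N_gt0)); apply: le_trans NR'.
  by rewrite ler_pM2l ?N_gt0.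
have -> : (l%:~R : Rl) = N%:R * r by rewrite /r; field; exact: N_neq0.
rewrite normrM (ger0_norm (ltW N_gt0)); apply: le_trans NR.
by rewrite ler_pM2l ?N_gt0.
Qed.

Lemma vertex_exists (f g : jseries) b :
  good (fun k l => f k l != 0) -> good (fun k l => g k l != 0) ->
  nonzero_series f -> nonzero_series g ->
  exists k1 l1 k2 l2, [/\ f k1 l1 != 0, g k2 l2 != 0,
    (forall k' l', f k' l' != 0 -> vi b k1 l1 <= vi b k' l'),
    (forall k' l', g k' l' != 0 -> vi b k2 l2 <= vi b k' l') &
    jmul f g (k1 + k2) (l1 + l2) != 0].
Proof.
move=> gf gg nf ng.
have [k1 [l1 [f1 Hf1 Hf2]]] := lexmin b gf nf.
have [k2 [l2 [g2 Hg1 Hg2]]] := lexmin b gg ng.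
exists k1, l1, k2, l2; split => //.
by rewrite (jmul_vertex f1 g2 Hf1 Hf2 Hg1 Hg2) mulf_neq0.
Qed.

Lemma good_mul (f g : jseries) :
  good (fun k l => f k l != 0) -> good (fun k l => g k l != 0) ->
  nonzero_series f -> nonzero_series g ->
  good (fun k l => jmul f g k l != 0).
Proof.
move=> gf gg nf ng.
have [[kf Hkf] Bf] := gf.
have [[kg Hkg] Bg] := gg.
split.
  exists (kf + kg) => k l /jmul_supp [k1 [l1 [h1 h2]]].
  have := Hkf _ _ h1; have := Hkg _ _ h2; lia.
move=> b C.
have [k1 [l1 [f1 Hf1 _]]] := lexmin b gf nf.
have [k2 [l2 [g2 Hg1 _]]] := lexmin b gg ng.
have [B1 HB1] := Bf b (C - vi b k2 l2).
have [B2 HB2] := Bg b (C - vi b k1 l1).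
exists (B1 + B2)%N => k l /jmul_supp [a [c [h1 h2]]] Hv.
have E : vi b a c + vi b (k - a) (l - c) = vi b k l.
  by rewrite -viD; congr vi; ring.
have A1 := Hf1 _ _ h1.
have A2 := Hg1 _ _ h2.
have [] := HB1 a c h1 (ltac:(lra)).
have [] := HB2 (k - a) (l - c) h2 (ltac:(lra)).
lia.
Qed.

Lemma above (S : int -> int -> bool) (X Rr : Rl) :
  (exists k0 : int, forall k l, S k l -> k0 <= k) ->
  (forall b, exists k l, S k l /\ vi b k l <= X + b * Rr) ->
  (forall k l, S k l -> l%:~R = Rr -> X < k%:~R) ->
  exists k l, S k l /\ Rr < l%:~R.
Proof.
move=> [k0 Hk0] Hb H0.
apply: contrapT => Hn.
have Hle : forall k l, S k l -> (l%:~R : Rl) <= Rr.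
  move=> k l Skl; case: (leP (l%:~R : Rl) Rr) => // h; exfalso; apply: Hn; by exists k, l.
set m := Num.ceil Rr - 1.
have gpos : 0 < Rr - m%:~R by have := ceilB1_lt Rr; rewrite -/m; lra.
set g := Rr - m%:~R.
set T := (`|X - k0%:~R| + 1) / g.
have Tg : T * g = `|X - k0%:~R| + 1 by rewrite /T; field; rewrite gt_eqF.
have T0 : 0 <= T by rewrite /T divr_ge0 // ?ltW // addr_ge0.
have [k [l [Skl Hv]]] := Hb (- T).
move: Hv; rewrite /vi => Hv.
have Hk := Hk0 _ _ Skl; rewrite -(ler_int Rl) in Hk.
have := ler_norm (X - k0%:~R).
case: (eqVneq (l%:~R : Rl) Rr) => Hl.
  have := H0 _ _ Skl Hl; rewrite Hl in Hv; lra.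
have Hlt : (l%:~R : Rl) < Rr by rewrite lt_neqAle Hl (Hle _ _ Skl).
have : l <= m.
  have : ~~ (Num.ceil Rr <= l) by rewrite ceil_le_int -ltNge.
  rewrite -ltNge /m; lia.
rewrite -(ler_int Rl) => Hlm.
have : T * g <= T * (Rr - l%:~R) by apply: ler_wpM2l => //; rewrite /g; lra.
rewrite Tg; nra.
Qed.

Lemma reflect_good (S : int -> int -> bool) : good S -> good (fun k l => S k (- l)).
Proof.
move=> [[k0 Hk0] HB]; split; first by exists k0 => k l /Hk0.
move=> b C; have [B HB'] := HB (- b) C; exists B => k l Skl Hv.
have /(HB' _ _ Skl) [h1 h2] : vi (- b) k (- l) <= C by move: Hv; rewrite /vi rmorphN /=; lra.
by split => //; move: h2; rewrite abszN.
Qed.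

Definition beta (X Rr : Rl) (k l : int) : Rl := (X - k%:~R) / (l%:~R - Rr).

Lemma maxbeta (S : int -> int -> bool) (X Rr : Rl) : good S ->
  (exists k l, S k l /\ Rr < l%:~R) ->
  exists k1 l1, [/\ S k1 l1, Rr < l1%:~R &
    forall k l, S k l -> Rr < l%:~R -> beta X Rr k l <= beta X Rr k1 l1].
Proof.
move=> [_ HB] [k0 [l0 [S0 L0]]].
set c := beta X Rr k0 l0.
have [B HB'] := HB c (X + c * Rr).
have key : forall k l, Rr < l%:~R -> (c <= beta X Rr k l) = (vi c k l <= X + c * Rr).
  move=> k l Hl; rewrite /beta ler_pdivlMr; last by lra.
  rewrite /vi; apply/idP/idP; lra.
have Hex : exists k l, [/\ [&& S k l, Rr < l%:~R & c <= beta X Rr k l],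
    (absz k <= B)%N & (absz l <= B)%N].
  have /(HB' k0 l0 S0) [a b] : vi c k0 l0 <= X + c * Rr by rewrite -key // lexx.
  by exists k0, l0; split => //; rewrite S0 L0 lexx.
have [k1 [l1 [/and3P [S1 L1 C1] _ _ H1]]] :=
  @box_min (fun k l => [&& S k l, Rr < l%:~R & c <= beta X Rr k l])
    (fun k l => - beta X Rr k l) B Hex.
exists k1, l1; split => // k l Skl Hl.
case: (leP c (beta X Rr k l)) => Hc; last by apply: le_trans (ltW Hc) C1.
have /(HB' _ _ Skl) [h1 h2] : vi c k l <= X + c * Rr by rewrite -key.
have : [&& S k l, Rr < l%:~R & c <= beta X Rr k l] by rewrite Skl Hl Hc.
move/(H1 k l) => /(_ h1 h2); lra.
Qed.

Lemma factB (S : int -> int -> bool) (X Rr : Rl) : good S ->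
  (forall b, exists k l, S k l /\ vi b k l <= X + b * Rr) ->
  exists k1 l1 k2 l2 (w : Rl), [/\ S k1 l1, S k2 l2, 0 <= w /\ w <= 1,
    w * l1%:~R + (1 - w) * l2%:~R = Rr & w * k1%:~R + (1 - w) * k2%:~R <= X].
Proof.
move=> gS Hb.
case: (pselect (exists k l, [/\ S k l, l%:~R = Rr & k%:~R <= X])) => [[k [l [Skl El Ek]]]|Hn0].
  exists k, l, k, l, 1; split; [done|done|split; lra| |lra].
  by rewrite -El; ring.
have H0 : forall k l, S k l -> l%:~R = Rr -> X < k%:~R.
  move=> k l Skl El; case: (ltP X k%:~R) => // h; exfalso; apply: Hn0; by exists k, l.
have [[k0 Hk0] _] := gS.
have [ka [la [Sa La]]] := above (ex_intro _ k0 Hk0) Hb H0.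
have Hb' : forall b, exists k l, S k (- l) /\ vi b k l <= X + b * (- Rr).
  move=> b; have [k [l [Skl Hv]]] := Hb (- b); exists k, (- l); split; first by rewrite opprK.
  by move: Hv; rewrite /vi rmorphN /=; lra.
have H0' : forall k l, S k (- l) -> l%:~R = - Rr -> X < k%:~R.
  by move=> k l Skl El; apply: (H0 _ _ Skl); rewrite rmorphN /= El opprK.
have gS' := reflect_good gS.
have [kb [lb [Sb Lb]]] := @above (fun k l => S k (- l)) X (- Rr)
   (ex_intro _ k0 (fun k l (h : S k (- l)) => Hk0 _ _ h)) Hb' H0'.
have [k1 [l1 [S1 L1 M1]]] := @maxbeta S X Rr gS (ex_intro _ ka (ex_intro _ la (conj Sa La))).
have [k2 [l2' [S2 L2 M2]]] := @maxbeta (fun k l => S k (- l)) X (- Rr) gS'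
   (ex_intro _ kb (ex_intro _ lb (conj Sb Lb))).
set a := beta X Rr k1 l1.
set bb := - beta X (- Rr) k2 l2'.
have F1 : forall b k l, S k l -> Rr < l%:~R -> vi b k l <= X + b * Rr -> b <= a.
  move=> b k l Skl Hl Hv; apply: le_trans (M1 _ _ Skl Hl).
  by rewrite /beta ler_pdivlMr; [move: Hv; rewrite /vi; lra| lra].
have F2 : forall b k l, S k l -> l%:~R < Rr -> vi b k l <= X + b * Rr -> bb <= b.
  move=> b k l Skl Hl Hv.
  have S' : S k (- - l) by rewrite opprK.
  have Hl' : - Rr < (- l)%:~R by rewrite rmorphN /=; lra.
  have := M2 _ _ S' Hl'.
  have : - b <= beta X (- Rr) k (- l).
    by rewrite /beta ler_pdivlMr rmorphN /=; [move: Hv; rewrite /vi; lra| lra].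
  rewrite /bb; lra.
have Hab : bb <= a.
  case: (leP bb a) => // Hlt; exfalso.
  have [k [l [Skl Hv]]] := Hb ((a + bb) / 2).
  case: (ltgtP (l%:~R : Rl) Rr) => Hl.
  - have := F2 _ _ _ Skl Hl Hv; lra.
  - have := F1 _ _ _ Skl Hl Hv; lra.
  - have := H0 _ _ Skl Hl; move: Hv; rewrite /vi Hl; lra.
have E1 : a * (l1%:~R - Rr) = X - k1%:~R.
  by rewrite /a /beta; field; rewrite subr_eq0 gt_eqF.
have E2 : bb * ((- l2')%:~R - Rr) = X - k2%:~R.
  rewrite /bb /beta rmorphN /=; field; rewrite subr_eq0; apply/negP => /eqP h; move: L2; rewrite h; lra.
have L2r : ((- l2')%:~R : Rl) < Rr by rewrite rmorphN /=; lra.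
have E2' : a * ((- l2')%:~R - Rr) <= X - k2%:~R.
  rewrite -E2; apply: ler_wnM2r => //; lra.
exists k1, l1, k2, (- l2').
have [m2 Em2] : exists m2, m2 = ((- l2')%:~R : Rl) by eexists.
rewrite -Em2 in E2' L2r *.
have [L El1] : exists L, L = (l1%:~R : Rl) by eexists.
rewrite -El1 in E1 L1 *.
set w := (Rr - m2) / (L - m2).
have D0 : 0 < L - m2 by lra.
have Ew : w * L + (1 - w) * m2 = Rr.
  by rewrite /w; field; rewrite subr_eq0; apply/negP => /eqP h; move: D0; rewrite h; lra.
have w0 : 0 <= w by rewrite /w divr_ge0 // ltW //; lra.
have w1 : w <= 1 by rewrite /w ler_pdivrMr // mul1r; lra.
exists w; split => //.
have P1 : w * (a * (L - Rr)) = w * (X - k1%:~R) by rewrite E1.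
have P2 : (1 - w) * (a * (m2 - Rr)) <= (1 - w) * (X - k2%:~R).
  by apply: ler_wpM2l => //; lra.
have Ew' : a * (w * L + (1 - w) * m2) = a * Rr by rewrite Ew.
nra.
Qed.

Lemma vl_cont b : continuous (vl b).
Proof. move=> q.
have h1 : (fun q : Rl*Rl => q.1) @ q --> q.1 by exact: cvg_fst.
have h3 : (fun q : Rl*Rl => b * q.2) @ q --> b * q.2.
  apply: cvgM => //; [exact: cvg_cst| exact: cvg_snd].
exact: (@cvgD Rl Rl^o _ (nbhs q) _ (fun q : Rl*Rl => q.1) (fun q : Rl*Rl => b * q.2) _ _ h1 h3).
Qed.

Lemma halfplane_closed b m : closed [set q : Rl * Rl | m <= vl b q].
Proof.
have := (continuous_closedP (vl b)).1 (@vl_cont b) [set x | m <= x].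
by move=> h; apply: h; exact: closed_ge.
Qed.

Lemma convA_half (P : set (Rl * Rl)) b m : (forall q, P q -> m <= vl b q) ->
  convA P `<=` [set q | m <= vl b q].
Proof.
move=> H q [a [c [[n [pts [w [Hp [Hw [Hs Ea]]]]]] [[Hc1 Hc2] Eq]]]].
rewrite /= Eq Ea /vl /= Hc2 addr0.
have S1 : \sum_(i < n) w i * (pts i).1 + b * \sum_(i < n) w i * (pts i).2 =
          \sum_(i < n) w i * vl b (pts i).
  rewrite mulr_sumr -big_split /=; apply: eq_bigr => i _; rewrite /vl /=; ring.
have S2 : m = \sum_(i < n) w i * m by rewrite -mulr_suml Hs mul1r.
have S3 : \sum_(i < n) w i * m <= \sum_(i < n) w i * vl b (pts i).
  by apply: ler_sum => i _; apply: ler_wpM2l => //; apply: H.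
lra.
Qed.

Lemma nuJ_to_H (f : jseries) b q : good (fun k l => f k l != 0) -> nonzero_series f ->
  nuJ N f q -> exists k l, [/\ f k l != 0,
     forall k' l', f k' l' != 0 -> vi b k l <= vi b k' l' & vl b (pt k l) <= vl b q].
Proof.
move=> gf nf Hq.
have [k [l [fkl Hmin _]]] := lexmin b gf nf.
exists k, l; split => //.
have Hsub : convA (jsupp N f) `<=` [set q | vl b (pt k l) <= vl b q].
  apply: convA_half => _ [k' [l' [h ->]]].
  by rewrite -/(pt k' l') vl_pt_le; apply: Hmin.
have := closureS Hsub; rewrite -(closure_id [set q | vl b (pt k l) <= vl b q]).1; last exact: halfplane_closed.
by apply.
Qed.

Lemma H_to_convA (f : jseries) (p : Rl * Rl) : good (fun k l => f k l != 0) ->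
  (forall b, exists k l, f k l != 0 /\ vl b (pt k l) <= vl b p) ->
  convA (jsupp N f) p.
Proof.
move=> gf Hb.
have Hb' : forall b, exists k l, f k l != 0 /\ vi b k l <= N%:R * p.1 + b * (N%:R * p.2).
  move=> b; have [k [l [fkl Hv]]] := Hb b; exists k, l; split => //.
  move: Hv; rewrite vl_pt ler_pdivrMr ?N_gt0 // /vl => Hv.
  by apply: le_trans Hv _; rewrite le_eqVlt; apply/orP; left; apply/eqP; ring.
have [k1 [l1 [k2 [l2 [w [f1 f2 [w0 w1] El Ek]]]]]] := factB gf Hb'.
set pts := fun i : 'I_2 => if (nat_of_ord i == 0)%N then pt k1 l1 else pt k2 l2.
set ws := fun i : 'I_2 => if (nat_of_ord i == 0)%N then w else 1 - w.
have [a Ea] : exists a, a = (\sum_(i < 2) ws i * (pts i).1, \sum_(i < 2) ws i * (pts i).2) by eexists.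
have Ha1 : a.1 = (w * k1%:~R + (1 - w) * k2%:~R) / N%:R.
  rewrite Ea /= !big_ord_recl big_ord0 /ws /pts /=; field; exact: N_neq0.
have Ha2 : a.2 = (w * l1%:~R + (1 - w) * l2%:~R) / N%:R.
  rewrite Ea /= !big_ord_recl big_ord0 /ws /pts /=; field; exact: N_neq0.
exists a, (p.1 - a.1, 0); split.
  exists 2%N, pts, ws; split.
    by move=> i; rewrite /pts; case: ifP => _; [exists k1, l1 | exists k2, l2].
  split; first by move=> i; rewrite /ws; case: ifP => _; lra.
  split; first by rewrite !big_ord_recl big_ord0 /ws /=; ring.
  by rewrite Ea.
split.
  split; last by []; rewrite /= subr_ge0 Ha1 ler_pdivrMr ?N_gt0 //; lra.
case: p Hb Hb' El Ek => x r Hb Hb' El Ek /=.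
congr pair; first ring.
rewrite Ha2 El addr0 /=; field; exact: N_neq0.
Qed.

Lemma nuJ_convA (f : jseries) : good (fun k l => f k l != 0) -> nonzero_series f ->
  nuJ N f = convA (jsupp N f).
Proof.
move=> gf nf; apply/seteqP; split; last exact: subset_closure.
move=> q Hq; apply: H_to_convA => // b.
have [k [l [h _ h2]]] := nuJ_to_H b gf nf Hq.
by exists k, l.
Qed.

Lemma main_eq (f g : jseries) : inRJ N f -> inRJ N g ->
  nonzero_series f -> nonzero_series g ->
  nuJ N (jmul f g) = minksum (nuJ N f) (nuJ N g).
Proof.
move=> rf rg nf ng.
have gf := good_RJ rf; have gg := good_RJ rg.
have gfg := good_mul gf gg nf ng.
have nfg : nonzero_series (jmul f g).
  have [k1 [l1 [k2 [l2 [_ _ _ _ h]]]]] := vertex_exists 0 gf gg nf ng.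
  by exists (k1 + k2), (l1 + l2).
apply/seteqP; split.
- rewrite (nuJ_convA gfg nfg).
  move=> q [a [c [[n [pts [w [Hp [Hw [Hs Ea]]]]]] [Hc Eq]]]].
  have Hch : forall i : 'I_n, exists pq : (Rl * Rl) * (Rl * Rl),
      [/\ jsupp N f pq.1, jsupp N g pq.2 & pts i = (pq.1.1 + pq.2.1, pq.1.2 + pq.2.2)].
    move=> i; have [k [l [h ->]]] := Hp i; rewrite -/(pt k l).
    have [k1 [l1 [h1 h2]]] := jmul_supp h.
    exists (pt k1 l1, pt (k - k1) (l - l1)); split => /=; [by exists k1, l1 | by exists (k - k1), (l - l1) | ].
    rewrite /pt /=; congr pair; rewrite !intrB; field; exact: N_neq0.
  have [F HF] := choice Hch.
  exists ((\sum_(i < n) w i * (F i).1.1) + c.1, (\sum_(i < n) w i * (F i).1.2) + c.2).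
  exists (\sum_(i < n) w i * (F i).2.1, \sum_(i < n) w i * (F i).2.2).
  split.
    apply: subset_closure.
    exists (\sum_(i < n) w i * (F i).1.1, \sum_(i < n) w i * (F i).1.2), c; split => //.
    exists n, (fun i => (F i).1), w; split; first by move=> i; have [] := HF i.
    by split.
  split.
    apply: subset_closure.
    exists (\sum_(i < n) w i * (F i).2.1, \sum_(i < n) w i * (F i).2.2), (0, 0); split.
      exists n, (fun i => (F i).2), w; split; first by move=> i; have [] := HF i.
      by split.
    by split; [split|rewrite /= !addr0].
  rewrite Eq Ea /=.
  have E1 : \sum_(i < n) w i * (pts i).1 = \sum_(i < n) w i * (F i).1.1 + \sum_(i < n) w i * (F i).2.1.
    rewrite -big_split /=; apply: eq_bigr => i _; have [_ _ ->] := HF i; rewrite /=; ring.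
  have E2 : \sum_(i < n) w i * (pts i).2 = \sum_(i < n) w i * (F i).1.2 + \sum_(i < n) w i * (F i).2.2.
    rewrite -big_split /=; apply: eq_bigr => i _; have [_ _ ->] := HF i; rewrite /=; ring.
  rewrite E1 E2; congr pair; ring.
- move=> _ [a [b [Ha [Hb ->]]]].
  rewrite (nuJ_convA gfg nfg); apply: H_to_convA => // be.
  have [kf [lf [ff _ Hvf]]] := nuJ_to_H be gf nf Ha.
  have [kg [lg [fg' _ Hvg]]] := nuJ_to_H be gg ng Hb.
  have [k1 [l1 [k2 [l2 [f1 g2 Hm1 Hm2 Hnz]]]]] := vertex_exists be gf gg nf ng.
  exists (k1 + k2), (l1 + l2); split => //.
  have A1 : vl be (pt k1 l1) <= vl be (pt kf lf) by rewrite vl_pt_le; apply: Hm1.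
  have A2 : vl be (pt k2 l2) <= vl be (pt kg lg) by rewrite vl_pt_le; apply: Hm2.
  have -> : vl be (pt (k1 + k2) (l1 + l2)) = vl be (pt k1 l1) + vl be (pt k2 l2).
    by rewrite !vl_pt viD mulrDl.
  have -> : vl be (a.1 + b.1, a.2 + b.2) = vl be a + vl be b by rewrite /vl /=; ring.
  lra.
Qed.

End Main.

Theorem theorem4p5 (N : nat) (f g : jseries) :
  (0 < N)%N -> inRJ N f -> inRJ N g -> nonzero_series f -> nonzero_series g ->
  nuJ N (jmul f g) = minksum (nuJ N f) (nuJ N g).
Proof. move=> hN; exact: main_eq. Qed.
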